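(* Let $L\ge1$ be an integer, let $K_1,\dots,K_L\subseteq[N]$ be pairwise disjoint, $x_0=\sum_{i=1}^L i\,\mathbb{1}_{K_i}$, $K=\bigcup_{i=1}^LK_i$, $\hat K=K\setminus K_L$, and $A\in\mathbb{R}^{m\times N}$. The following are equivalent: (i) $x_0$ is the unique solution of $\min\|x\|_1$ subject to $Ax=Ax_0$ and $x\in[0,L]^N$; (ii) every $\hat x\in\mathbb{R}^N$ of the form $\hat x=\tilde x_{\hat K}+L\,\mathbb{1}_{K_L}$ with $\tilde x\in(0,L)^N$ is the unique solution of $\min\|x\|_1$ subject to $Ax=A\hat x$ and $x\in[0,L]^N$.
   Context: $\mathbb{1}_S$ has entries $1$ on $S$, $0$ elsewhere; $\tilde x_{\hat K}$ agrees with $\tilde x$ on $\hat K$ and is zero elsewhere. ''Unique solution'' means unique minimizer. *)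

(* Defs.v *)
From HB Require Import structures.
From mathcomp Require Import all_boot all_order all_algebra.
Set Implicit Arguments. Unset Strict Implicit. Unset Printing Implicit Defensive.
Import Order.TTheory GRing.Theory Num.Theory.
Local Open Scope ring_scope.

Definition l1norm (R : realFieldType) (N : nat) (x : 'cV[R]_N) : R :=
  \sum_(j < N) `|x j 0|.

Definition feasible (R : realFieldType) (m N L : nat) (A : 'M[R]_(m, N))
    (b : 'cV[R]_m) (x : 'cV[R]_N) : Prop :=
  A *m x = b /\ forall j : 'I_N, 0 <= x j 0 <= L%:R.

Definition unique_l1_box_solution (R : realFieldType) (m N L : nat)
    (A : 'M[R]_(m, N)) (x : 'cV[R]_N) : Prop :=
  feasible L A (A *m x) x /\
  forall y : 'cV[R]_N, feasible L A (A *m x) y -> y <> x -> l1norm x < l1norm y.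

Definition indic (R : realFieldType) (N : nat) (S : {set 'I_N}) : 'cV[R]_N :=
  \col_(j < N) (j \in S)%:R.

Definition restrict (R : realFieldType) (N : nat) (S : {set 'I_N}) (x : 'cV[R]_N)
  : 'cV[R]_N :=
  \col_(j < N) (if j \in S then x j 0 else 0).

(* Main.v *)
Require Import Defs.
From HB Require Import structures.
From mathcomp Require Import all_boot all_order all_algebra.
From mathcomp Require Import ring lra.
Import Order.TTheory GRing.Theory Num.Theory.
Local Open Scope ring_scope.

Lemma l1_nn (R : realFieldType) N (x : 'cV[R]_N) :
  (forall j, 0 <= x j 0) -> l1norm x = \sum_j x j 0.
Proof. by move=> H; apply: eq_bigr => j _; rewrite ger0_norm. Qed.

Lemma prod_le_factor (R : realFieldType) N (a : 'I_N -> R) j :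
  (forall i, 0 <= a i <= 1) -> \prod_i a i <= a j.
Proof.
move=> H; rewrite (bigD1 j) //=.
have /andP[h0 h1] := H j.
have := prodr_ile1 (index_enum _) (P := fun i => i != j) (F := a) (fun i _ => H i).
move=> hp.
have hp0 : 0 <= \prod_(i | i != j) a i by apply: prodr_ge0 => i _; case/andP: (H i).
nra.
Qed.

Lemma transfer (R : realFieldType) m N L (A : 'M[R]_(m, N)) (x x' : 'cV[R]_N) :
  (0 < L)%N -> (forall j, 0 <= x' j 0 <= L%:R) ->
  (forall j, (x j 0 == 0) || (x j 0 == L%:R) -> x' j 0 = x j 0) ->
  unique_l1_box_solution L A x -> unique_l1_box_solution L A x'.
Proof.
move=> L0 bx' pat [[_ bx] U].
have Lp : 0 < L%:R :> R by rewrite ltr0n.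
split; first by split.
move=> y' [Ay' by'] ne.
pose a j := if (x j 0 == 0) || (x j 0 == L%:R) then 1
            else Num.min (x j 0) (L%:R - x j 0) / L%:R.
have ha : forall j, 0 < a j <= 1 /\ ((x j 0 == 0) || (x j 0 == L%:R) = false ->
            a j * L%:R <= x j 0 /\ a j * L%:R <= L%:R - x j 0).
  move=> j; rewrite /a; case: ifP => hc; first by rewrite ltr01 lexx.
  have /andP[b0 b1] := bx j.
  move/negbT: hc; rewrite negb_or => /andP[n0 nL].
  have p0 : 0 < x j 0 by rewrite lt_neqAle eq_sym n0 b0.
  have p1 : 0 < L%:R - x j 0 by rewrite subr_gt0 lt_neqAle nL b1.
  have hm1 : Num.min (x j 0) (L%:R - x j 0) <= x j 0 by rewrite ge_min lexx.
  have hm2 : Num.min (x j 0) (L%:R - x j 0) <= L%:R - x j 0 by rewrite ge_min lexx orbT.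
  have hm0 : 0 < Num.min (x j 0) (L%:R - x j 0) by rewrite lt_min p0 p1.
  rewrite mulfVK ?gt_eqF //; split=> // ; apply/andP; split.
    by rewrite divr_gt0.
  by rewrite ler_pdivrMr // mul1r; lra.
pose t := \prod_j a j.
have t0 : 0 < t by apply: prodr_gt0 => j _; case: (ha j) => /andP[].
have tle : forall j, t <= a j.
  by move=> j; apply: prod_le_factor => i; case: (ha i) => /andP[h1 h2] _; rewrite ltW.
have t1 : t <= 1 by apply: prodr_ile1 => i _; case: (ha i) => /andP[h1 h2] _; rewrite ltW.
pose y := x + t *: (y' - x').
have yE : forall j, y j 0 = x j 0 + t * (y' j 0 - x' j 0) by move=> j; rewrite !mxE.
have by_ : forall j, 0 <= y j 0 <= L%:R.
  move=> j; rewrite yE.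
  have /andP[a0 a1] := bx j; have /andP[c0 c1] := bx' j; have /andP[d0 d1] := by' j.
  case hc: ((x j 0 == 0) || (x j 0 == L%:R)).
    have := pat j hc; case/orP: hc => /eqP -> ->; apply/andP; split; nra.
  case: (ha j) => [/andP[ha0 ha1] /(_ hc) [e1 e2]].
  have := tle j => e3.
  apply/andP; split; nra.
have fy : feasible L A (A *m x) y.
  split=> //.
  by rewrite /y mulmxDr -scalemxAr mulmxBr Ay' subrr scaler0 addr0.
have ney : y <> x.
  move=> /eqP; rewrite /y -subr_eq0 addrC addKr scaler_eq0 subr_eq0 gt_eqF //=.
  by move/eqP.
have := U y fy ney.
have nn : forall z : 'cV[R]_N, (forall j, 0 <= z j 0 <= L%:R) -> forall j, 0 <= z j 0.
  by move=> z hz j; case/andP: (hz j).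
rewrite (@l1_nn _ _ _ (nn _ bx)) (@l1_nn _ _ _ (nn _ by_)) (@l1_nn _ _ _ (nn _ bx')) (@l1_nn _ _ _ (nn _ by')).
rewrite (eq_bigr _ (fun j _ => yE j)) big_split /= -mulr_sumr sumrB.
move=> h.
have : 0 < t * (\sum_j y' j 0 - \sum_j x' j 0) by lra.
rewrite pmulr_rgt0 // subr_gt0 //.
Qed.

Definition patt (R : realFieldType) N L (S U : {set 'I_N}) (x : 'cV[R]_N) :=
  forall j, (j \in U -> x j 0 = L%:R) /\ (j \in S -> j \notin U -> 0 < x j 0 < L%:R)
            /\ (j \notin S -> j \notin U -> x j 0 = 0).
Arguments patt {R N} L S U x.

Lemma pattern_transfer (R : realFieldType) m N L (A : 'M[R]_(m, N)) S U (x x' : 'cV[R]_N) :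
  (0 < L)%N -> patt L S U x -> patt L S U x' ->
  unique_l1_box_solution L A x -> unique_l1_box_solution L A x'.
Proof.
move=> L0 Px Px'; have Lp : 0 < L%:R :> R by rewrite ltr0n.
apply: transfer => // j.
  have [h1 [h2 h3]] := Px' j.
  case: (boolP (j \in U)) => ju; first by rewrite h1 // lexx ltW.
  case: (boolP (j \in S)) => js; first by case/andP: (h2 js ju) => a b; rewrite !ltW.
  by rewrite h3 // lexx ltW.
have [h1 [h2 h3]] := Px j; have [g1 [g2 g3]] := Px' j.
case: (boolP (j \in U)) => ju; first by rewrite h1 // g1.
case: (boolP (j \in S)) => js; last by rewrite h3 // g3.
by case/andP: (h2 js ju) => a b; rewrite gt_eqF // lt_eqF.
Qed.

Lemma mem_bigcup_seq (T : finType) (K : nat -> {set T}) (r : seq nat) j :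
  (j \in \bigcup_(i <- r) K i) = has (fun i => j \in K i) r.
Proof.
elim: r => [|a r IH]; first by rewrite big_nil in_set0.
by rewrite big_cons in_setU IH.
Qed.

Theorem theorem4p3 (R : realFieldType) (m N L : nat) (K : nat -> {set 'I_N})
  (A : 'M[R]_(m, N)) :
  (1 <= L)%N ->
  (forall i j : nat, (1 <= i <= L)%N -> (1 <= j <= L)%N -> i <> j ->
      [disjoint K i & K j]) ->
  let x0 : 'cV[R]_N := \sum_(1 <= i < L.+1) i%:R *: indic R (K i) in
  let Khat : {set 'I_N} := (\bigcup_(1 <= i < L.+1) K i) :\: K L in
  unique_l1_box_solution L A x0 <->
  (forall xt : 'cV[R]_N, (forall j : 'I_N, 0 < xt j 0 < L%:R) ->
     unique_l1_box_solution L A (restrict Khat xt + L%:R *: indic R (K L))).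
Proof.
move=> L1 disj x0 Khat.
have Lp : 0 < L%:R :> R by rewrite ltr0n.
have x0E : forall j, x0 j 0 = \sum_(1 <= i < L.+1) i%:R * (j \in K i)%:R.
  by move=> j; rewrite /x0 summxE; apply: eq_bigr => i _; rewrite !mxE.
have x0in : forall j i0, (1 <= i0 <= L)%N -> j \in K i0 -> x0 j 0 = i0%:R.
  move=> j i0 hi0 hj; rewrite x0E (bigD1_seq i0) ?mem_index_iota ?iota_uniq //=.
  rewrite hj mulr1 big1_seq ?addr0 // => i /andP[ne]; rewrite mem_index_iota => hi.
  by rewrite (disjointFr (disj i0 i hi0 hi (nesym (elimN eqP ne))) hj) mulr0.
have x0out : forall j, j \notin \bigcup_(1 <= i < L.+1) K i -> x0 j 0 = 0.
  move=> j; rewrite mem_bigcup_seq => /hasPn hn; rewrite x0E big1_seq // => i hi.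
  by rewrite (negbTE (hn i hi)) mulr0.
have P0 : patt L Khat (K L) x0.
  move=> j; split; first by move=> hj; apply: x0in => //; rewrite L1 leqnn.
  split.
    rewrite /Khat in_setD => /andP[_ hj] hnL; move: hj; rewrite mem_bigcup_seq.
    case/hasP => i; rewrite mem_index_iota => hi hji.
    have hi' : (1 <= i <= L)%N by move: hi; rewrite ltnS.
    rewrite (x0in j i hi' hji).
    have iL : i != L by apply/eqP => eiL; move: hji; rewrite eiL (negbTE hnL).
    case/andP: hi' => i1 iL'.
    rewrite ltr0n ltr_nat (leq_trans _ i1) //= ltn_neqAle iL iL'.
    done.
  move=> hK hL; apply: x0out; apply: contra hK => hj.
  by rewrite /Khat in_setD hj hL.
have Phat : forall xt : 'cV[R]_N, (forall j : 'I_N, 0 < xt j 0 < L%:R) ->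
   patt L Khat (K L) (restrict Khat xt + L%:R *: indic R (K L)).
  move=> xt hxt j; rewrite !mxE.
  have hKL : j \in K L -> j \notin Khat by move=> h; rewrite /Khat in_setD h.
  split; first by move=> h; rewrite (negbTE (hKL h)) h add0r mulr1.
  split; first by move=> h1 h2; rewrite h1 (negbTE h2) mulr0 addr0.
  by move=> h1 h2; rewrite (negbTE h1) (negbTE h2) mulr0 addr0.
split.
  by move=> H xt hxt; exact: (@pattern_transfer _ _ _ _ _ _ _ _ _ L1 P0 (Phat xt hxt)).
move=> H.
have hc : forall j : 'I_N, 0 < (const_mx (L%:R / 2) : 'cV[R]_N) j 0 < L%:R.
  by move=> j; rewrite mxE; apply/andP; split; lra.
by exact: (@pattern_transfer _ _ _ _ _ _ _ _ _ L1 (Phat _ hc) P0 (H _ hc)).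
Qed.
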